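(* Let $h$ be the Hahn sequence space and let $\Delta:h\to h$ be the forward difference operator $(\Delta x)_k=x_k-x_{k+1}$. Then the spectrum of $\Delta$ on $h$ is $$\sigma(\Delta,h)=\{\alpha\in\mathbb{C}:|1-\alpha|\le 1\}.$$
   Context: Sequences are indexed by $\mathbb{N}=\{0,1,2,\dots\}$. The Hahn sequence space is $h=\{x=(x_k)\in\mathbb{C}^{\mathbb{N}}:\sum_{k=1}^\infty k|x_k-x_{k+1}|<\infty \text{ and } \lim_{k\to\infty}x_k=0\}$, a Banach space with the norm $\|x\|_h=\sum_k k|x_k-x_{k+1}|+\sup_k|x_k|$. The forward difference operator $\Delta$ is given by the infinite matrix with $1$ on the main diagonal, $-1$ on the first superdiagonal and $0$ elsewhere, i.e. $(\Delta x)_k=x_k-x_{k+1}$. For a bounded linear operator $T$ on a Banach space $X$, the spectrum $\sigma(T,X)$ is the set of $\alpha\in\mathbb{C}$ for which $\alpha I-T$ does not have a bounded inverse defined on all of $X$. *)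

(* Defs.v *)
From Stdlib Require Import Reals.
From Coquelicot Require Import Coquelicot.

Definition seqC := nat -> C.

(* Membership in the Hahn sequence space h:
   sum_k k |x_k - x_{k+1}| < oo  (the k = 0 term vanishes)  and  x_k -> 0. *)
Definition in_hahn (x : seqC) : Prop :=
  ex_series (fun k => INR k * Cmod (Cminus (x k) (x (S k))))
  /\ filterlim x eventually (locally (RtoC 0)).

Definition hahn_norm (x : seqC) : R :=
  Series (fun k => INR k * Cmod (Cminus (x k) (x (S k))))
  + real (Sup_seq (fun k => Cmod (x k))).

Definition Delta (x : seqC) : seqC := fun k => Cminus (x k) (x (S k)).

Definition shifted_Delta (alpha : C) (x : seqC) : seqC :=
  fun k => Cminus (Cmult alpha (x k)) (Delta x k).

Definition hahn_resolvent (alpha : C) : Prop :=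
  exists S : seqC -> seqC,
    (forall y, in_hahn y -> in_hahn (S y))
    /\ (forall y z (a b : C), in_hahn y -> in_hahn z ->
          S (fun k => Cplus (Cmult a (y k)) (Cmult b (z k)))
          = (fun k => Cplus (Cmult a (S y k)) (Cmult b (S z k))))
    /\ (exists M : R, forall y, in_hahn y -> hahn_norm (S y) <= M * hahn_norm y)
    /\ (forall y, in_hahn y -> shifted_Delta alpha (S y) = y)
    /\ (forall x, in_hahn x -> S (shifted_Delta alpha x) = x).

Definition hahn_spectrum_Delta (alpha : C) : Prop := ~ hahn_resolvent alpha.

(* Main.v *)
Require Import Defs.
From Stdlib Require Import Reals.
From Coquelicot Require Import Coquelicot.
From Stdlib Require Import Lra Lia Psatz FunctionalExtensionality.

Lemma sqrt2_lt2 : sqrt 2 < 2.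
Proof. pose proof Rlt_sqrt2_0. pose proof (sqrt_sqrt 2 ltac:(lra)). nra. Qed.

Lemma nonneg_bounded_series (a : nat -> R) (M : R) :
  (forall n, 0 <= a n) -> (forall N, sum_n a N <= M) ->
  ex_series a /\ Series a <= M.
Proof.
  intros H0 HM.
  destruct (ex_finite_lim_seq_incr (sum_n a) M) as [l Hl].
  - intros n. rewrite sum_Sn. unfold plus; simpl. specialize (H0 (S n)). lra.
  - exact HM.
  - assert (Hs : is_series a l) by exact Hl.
    split. exists l. exact Hs.
    rewrite (is_series_unique a l Hs).
    assert (Rbar_le l M).
    { apply (is_lim_seq_le (sum_n a) (fun _ => M)); auto. apply is_lim_seq_const. }
    exact H.
Qed.

Lemma sum_le_series (a : nat -> R) N :
  (forall n, 0 <= a n) -> ex_series a -> sum_n a N <= Series a.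
Proof.
  intros H0 [l Hl]. rewrite (is_series_unique a l Hl).
  apply (is_lim_seq_incr_compare (sum_n a) l Hl).
  intros n. rewrite sum_Sn. unfold plus; simpl. specialize (H0 (S n)). lra.
Qed.

Lemma series_nonneg (a : nat -> R) :
  (forall n, 0 <= a n) -> ex_series a -> 0 <= Series a.
Proof.
  intros H0 He. pose proof (sum_le_series a 0 H0 He). rewrite sum_O in H. specialize (H0 0%nat). lra.
Qed.

Lemma term_le_series (a : nat -> R) n :
  (forall n, 0 <= a n) -> ex_series a -> a n <= Series a.
Proof.
  intros H0 He. pose proof (sum_le_series a n H0 He). destruct n. rewrite sum_O in H; lra.
  rewrite sum_Sn in H. unfold plus in H; simpl in H.
  assert (0 <= sum_n a n).
  { clear H. induction n. rewrite sum_O; auto. rewrite sum_Sn. unfold plus; simpl. specialize (H0 (S n)). lra. }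
  lra.
Qed.

Lemma tail_le_series (a : nat -> R) n :
  (forall n, 0 <= a n) -> ex_series a ->
  ex_series (fun k => a (n + k)%nat) /\ Series (fun k => a (n+k)%nat) <= Series a.
Proof.
  intros H0 He. split. apply (ex_series_incr_n a n). auto.
  destruct n. apply Req_le. apply Series_ext. intros; reflexivity.
  rewrite (Series_incr_n a (S n)); [|lia|auto].
  assert (0 <= sum_f_R0 a (Init.Nat.pred (S n))).
  { rewrite <- sum_n_Reals. generalize (Init.Nat.pred (S n)). intros m. induction m. rewrite sum_O; auto. rewrite sum_Sn. unfold plus; simpl. specialize (H0 (S m)). lra. }
  lra.
Qed.

Lemma series_le_gen (a b : nat -> R) :
  (forall n, 0 <= a n <= b n) -> ex_series b -> ex_series a /\ Series a <= Series b.
Proof.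
  intros H Hb. split. apply (ex_series_le a b). intros n. unfold norm; simpl. unfold abs; simpl.
  rewrite Rabs_pos_eq; apply H. auto. apply Series_le; auto.
Qed.


Lemma sup_bounds (u : nat -> R) (B : R) :
  (forall k, 0 <= u k <= B) ->
  (forall k, u k <= real (Sup_seq (fun k => u k))) /\
  (forall B', (forall k, u k <= B') -> real (Sup_seq (fun k => u k)) <= B').
Proof.
  intros H.
  assert (Hup : Rbar_le (Sup_seq (fun k => u k)) B).
  { replace (Finite B) with (Sup_seq (fun _ => Finite B)).
    apply Sup_seq_le. intros n; simpl; apply H.
    apply is_sup_seq_unique. intros eps. split. intros n; simpl. destruct eps; simpl; lra.
    exists 0%nat. simpl. destruct eps; simpl; lra. }
  assert (Hlo : forall k, Rbar_le (u k) (Sup_seq (fun k => u k))).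
  { intros k. apply (Sup_seq_minor_le _ (u k) k). simpl. lra. }
  destruct (Sup_seq (fun k => u k)) as [s| |] eqn:E; simpl in *.
  - split. intros k. apply (Hlo k). intros B' HB'.
    assert (Rbar_le (Sup_seq (fun k => u k)) B').
    { replace (Finite B') with (Sup_seq (fun _ => Finite B')).
      apply Sup_seq_le. intros n; simpl; apply HB'.
      apply is_sup_seq_unique. intros eps. split. intros n; simpl. destruct eps; simpl; lra.
      exists 0%nat. simpl. destruct eps; simpl; lra. }
    rewrite E in H0. exact H0.
  - contradiction.
  - specialize (Hlo 0%nat). contradiction.
Qed.

Lemma lim0_iff (x : seqC) :
  filterlim x eventually (locally (RtoC 0)) <->
  (forall eps, 0 < eps -> exists N, forall k, (N <= k)%nat -> Cmod (x k) < eps).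
Proof.
  split.
  - intros H eps Heps.
    assert (He2 : 0 < eps / 2) by lra.
    destruct (proj1 (filterlim_locally x (RtoC 0)) H (mkposreal _ He2)) as [N HN].
    exists N. intros k Hk. specialize (HN k Hk).
    pose proof (C_NormedModule_mixin_compat2 _ _ _ HN) as H1. simpl in H1.
    pose proof sqrt2_lt2. pose proof Rlt_sqrt2_0. simpl in H1.
    assert (sqrt 2 * (eps/2) < eps) by (clear - Heps H0 H2; nra). 
    apply Rlt_trans with (sqrt 2 * (eps/2)); [|exact H3].
    eapply Rle_lt_trans; [apply Req_le|exact H1]. f_equal. unfold minus,plus,opp; simpl. ring.
  - intros H. apply filterlim_locally. intros eps.
    destruct (H eps (cond_pos eps)) as [N HN]. exists N. intros k Hk.
    apply C_NormedModule_mixin_compat1.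
    replace (minus (x k) (RtoC 0)) with (x k) by (unfold minus,plus,opp; simpl; ring). apply HN; auto.
Qed.

Lemma sum_nonneg (a : nat -> R) N : (forall n, 0 <= a n) -> 0 <= sum_n a N.
Proof. intros H. induction N. rewrite sum_O; auto. rewrite sum_Sn. unfold plus; simpl. specialize (H (S N)). lra. Qed.

Lemma term_le_sum (a : nat -> R) N k : (forall n, 0 <= a n) -> (k <= N)%nat -> a k <= sum_n a N.
Proof. intros H Hk. induction N. assert (k = 0%nat) by lia. subst. rewrite sum_O; lra.
  rewrite sum_Sn. unfold plus; simpl. destruct (Nat.eq_dec k (S N)). subst.
  pose proof (sum_nonneg a N H). lra. specialize (IHN ltac:(lia)). specialize (H (S N)). lra. Qed.

Lemma lim0_bounded (x : seqC) :
  filterlim x eventually (locally (RtoC 0)) -> exists B, forall k, Cmod (x k) <= B.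
Proof.
  intros H. destruct (proj1 (lim0_iff x) H 1 ltac:(lra)) as [N HN].
  exists (1 + sum_n (fun j => Cmod (x j)) N). intros k.
  pose proof (sum_nonneg (fun j => Cmod (x j)) N (fun n => Cmod_ge_0 _)).
  destruct (Compare_dec.le_lt_dec N k). specialize (HN k l). lra.
  pose proof (term_le_sum (fun j => Cmod (x j)) N k (fun n => Cmod_ge_0 _) ltac:(lia)). simpl in H1. lra.
Qed.


Definition CS (a : nat -> C) : C := (Series (fun n => fst (a n)), Series (fun n => snd (a n))).
Definition summ (a : nat -> C) := ex_series (fun n => Cmod (a n)).

Lemma fst_le_Cmod (z : C) : Rabs (fst z) <= Cmod z.
Proof. pose proof (Rmax_Cmod z). pose proof (Rmax_l (Rabs (fst z)) (Rabs (snd z))). lra. Qed.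
Lemma snd_le_Cmod (z : C) : Rabs (snd z) <= Cmod z.
Proof. pose proof (Rmax_Cmod z). pose proof (Rmax_r (Rabs (fst z)) (Rabs (snd z))). lra. Qed.

Lemma ex_series_mult_l (c : R) (a : nat -> R) : ex_series a -> ex_series (fun n => c * a n).
Proof. intros H. pose proof (ex_series_scal_r c a H). eapply ex_series_ext; [|exact H0]. intros; simpl; ring. Qed.

Lemma summ_comp (a : nat -> C) : summ a ->
  ex_series (fun n => Rabs (fst (a n))) /\ ex_series (fun n => Rabs (snd (a n))) /\
  ex_series (fun n => fst (a n)) /\ ex_series (fun n => snd (a n)).
Proof.
  intros H.
  assert (H1 : ex_series (fun n => Rabs (fst (a n)))).
  { apply (series_le_gen _ _ (fun n => conj (Rabs_pos _) (fst_le_Cmod (a n))) H). }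
  assert (H2 : ex_series (fun n => Rabs (snd (a n)))).
  { apply (series_le_gen _ _ (fun n => conj (Rabs_pos _) (snd_le_Cmod (a n))) H). }
  repeat split; auto; apply ex_series_Rabs; auto.
Qed.

Lemma summ_le (a : nat -> C) (b : nat -> R) : (forall n, Cmod (a n) <= b n) -> ex_series b -> summ a.
Proof. intros H Hb. apply (series_le_gen _ _ (fun n => conj (Cmod_ge_0 _) (H n)) Hb). Qed.

Lemma summ_scal (c : C) (a : nat -> C) : summ a -> summ (fun n => Cmult c (a n)).
Proof. intros H. apply (summ_le _ (fun n => Cmod c * Cmod (a n))). intros n; rewrite Cmod_mult; lra.
  apply ex_series_mult_l; auto. Qed.

Lemma summ_plus (a b : nat -> C) : summ a -> summ b -> summ (fun n => Cplus (a n) (b n)).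
Proof. intros H1 H2. apply (summ_le _ (fun n => Cmod (a n) + Cmod (b n))). intros n; apply Cmod_triangle.
  pose proof (ex_series_plus _ _ H1 H2). exact H. Qed.

Lemma CS_plus (a b : nat -> C) : summ a -> summ b -> CS (fun n => Cplus (a n) (b n)) = Cplus (CS a) (CS b).
Proof.
  intros Ha Hb. destruct (summ_comp a Ha) as (_&_&Ha1&Ha2). destruct (summ_comp b Hb) as (_&_&Hb1&Hb2).
  unfold CS, Cplus; simpl. f_equal.
  rewrite <- Series_plus; auto. rewrite <- Series_plus; auto.
Qed.

Lemma CS_scal (c : C) (a : nat -> C) : summ a -> CS (fun n => Cmult c (a n)) = Cmult c (CS a).
Proof.
  intros Ha. destruct (summ_comp a Ha) as (_&_&Ha1&Ha2).
  unfold CS, Cmult; simpl. f_equal.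
  - rewrite <- !Series_scal_l. rewrite <- Series_minus; try apply ex_series_mult_l; auto.
  - rewrite <- !Series_scal_l. rewrite <- Series_plus; try apply ex_series_mult_l; auto.
Qed.

Lemma CS_incr (a : nat -> C) : summ a -> CS a = Cplus (a 0%nat) (CS (fun n => a (S n))).
Proof.
  intros Ha. destruct (summ_comp a Ha) as (_&_&Ha1&Ha2).
  unfold CS, Cplus; simpl. f_equal; apply Series_incr_1; auto.
Qed.

Lemma Cmod_CS (a : nat -> C) : summ a -> Cmod (CS a) <= 2 * Series (fun n => Cmod (a n)).
Proof.
  intros Ha. destruct (summ_comp a Ha) as (Hr1&Hr2&_&_).
  pose proof (Cmod_2Rmax (CS a)). unfold CS in H at 2; simpl in H.
  pose proof (Series_Rabs _ Hr1). pose proof (Series_Rabs _ Hr2).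
  pose proof (Series_le _ _ (fun n => conj (Rabs_pos _) (fst_le_Cmod (a n))) Ha).
  pose proof (Series_le _ _ (fun n => conj (Rabs_pos _) (snd_le_Cmod (a n))) Ha).
  pose proof (series_nonneg _ (fun n => Cmod_ge_0 (a n)) Ha).
  assert (Rmax (Rabs (Series (fun n => fst (a n)))) (Rabs (Series (fun n => snd (a n)))) <= Series (fun n => Cmod (a n))).
  { apply Rmax_lub; lra. }
  pose proof sqrt2_lt2. pose proof Rlt_sqrt2_0.
  assert (sqrt 2 * Rmax (Rabs (Series (fun n => fst (a n)))) (Rabs (Series (fun n => snd (a n)))) <= 2 * Series (fun n => Cmod (a n))).
  { apply Rle_trans with (sqrt 2 * Series (fun n => Cmod (a n))). apply Rmult_le_compat_l; lra. nra. }
  lra.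
Qed.

Lemma CS_minus (a b : nat -> C) : summ a -> summ b -> CS (fun n => Cminus (a n) (b n)) = Cminus (CS a) (CS b).
Proof.
  intros Ha Hb. unfold Cminus.
  rewrite (CS_plus a (fun n => Copp (b n))); auto.
  - f_equal. replace (Copp (CS b)) with (Cmult (Copp 1) (CS b)) by ring.
    rewrite <- CS_scal; auto. f_equal. apply functional_extensionality; intros; ring.
  - apply (summ_le _ (fun n => Cmod (b n))). intros; rewrite Cmod_opp; lra. auto.
Qed.


Lemma CS_ext (a b : nat -> C) : (forall n, a n = b n) -> CS a = CS b.
Proof. intros H. f_equal. apply functional_extensionality; auto. Qed.

Definition coef (beta : C) (n : nat) : C := Cmult (Cinv beta) (Cpow (Copp (Cinv beta)) n).

Lemma beta_nz (beta : C) : 1 < Cmod beta -> beta <> RtoC 0.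
Proof. intros H E. rewrite E, Cmod_0 in H. lra. Qed.

Lemma Cmod_coef beta n : 1 < Cmod beta -> Cmod (coef beta n) = / Cmod beta * (/ Cmod beta) ^ n.
Proof. intros H. pose proof (beta_nz _ H). unfold coef. rewrite Cmod_mult, Cmod_pow, Cmod_opp, Cmod_inv; auto. Qed.

Lemma coef0 beta : 1 < Cmod beta -> Cmult beta (coef beta 0) = RtoC 1.
Proof. intros H. pose proof (beta_nz _ H). unfold coef. simpl. field. auto. Qed.

Lemma coefS beta n : 1 < Cmod beta -> Cmult beta (coef beta (S n)) = Copp (coef beta n).
Proof. intros H. pose proof (beta_nz _ H). unfold coef. simpl. field. auto. Qed.

Lemma q_facts beta : 1 < Cmod beta -> 0 < / Cmod beta < 1.
Proof. intros H. split. apply Rinv_0_lt_compat; lra.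
  rewrite <- Rinv_1. apply Rinv_lt_contravar; lra. Qed.

Lemma exQ beta : 1 < Cmod beta -> ex_series (fun n => / Cmod beta * (/ Cmod beta) ^ n).
Proof. intros H. pose proof (q_facts _ H). apply ex_series_mult_l. apply ex_series_geom.
  rewrite Rabs_pos_eq; lra. Qed.

Definition Qc beta := Series (fun n => / Cmod beta * (/ Cmod beta) ^ n).

Lemma Qc_nonneg beta : 1 < Cmod beta -> 0 <= Qc beta.
Proof. intros H. pose proof (q_facts _ H). apply series_nonneg. intros n.
  pose proof (pow_le (/ Cmod beta) n ltac:(lra)). nra. apply exQ; auto. Qed.

Lemma geomB beta B : 1 < Cmod beta ->
  ex_series (fun n => / Cmod beta * (/ Cmod beta) ^ n * B) /\
  Series (fun n => / Cmod beta * (/ Cmod beta) ^ n * B) = Qc beta * B.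
Proof. intros H. split. apply ex_series_scal_r. apply exQ; auto. apply Series_scal_r. Qed.

Lemma summ_cu beta (u : seqC) B k : 1 < Cmod beta -> (forall j, Cmod (u j) <= B) ->
  summ (fun n => Cmult (coef beta n) (u (k + n)%nat)).
Proof. intros H HB. pose proof (q_facts _ H).
  apply (summ_le _ (fun n => / Cmod beta * (/ Cmod beta) ^ n * B)).
  intros n. rewrite Cmod_mult, Cmod_coef; auto. apply Rmult_le_compat_l. pose proof (pow_le (/ Cmod beta) n ltac:(lra)). nra.
  apply HB. apply geomB; auto. Qed.

Definition Sop (beta : C) (y : seqC) : seqC := fun k => CS (fun n => Cmult (coef beta n) (y (k + n)%nat)).

Lemma key beta (u : seqC) B k : 1 < Cmod beta -> (forall j, Cmod (u j) <= B) ->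
  Cplus (Cmult beta (Sop beta u k)) (Sop beta u (S k)) = u k.
Proof.
  intros H HB. unfold Sop.
  rewrite <- CS_scal by (eapply summ_cu; eauto).
  rewrite CS_incr by (apply summ_scal; eapply summ_cu; eauto).
  rewrite (CS_ext _ (fun n => Cmult (Copp 1) (Cmult (coef beta n) (u (S k + n)%nat)))).
  rewrite CS_scal by (eapply summ_cu; eauto).
  replace (Cmult beta (Cmult (coef beta 0) (u (k + 0)%nat))) with (Cmult (Cmult beta (coef beta 0)) (u k)).
  rewrite coef0; auto. ring.
  rewrite Nat.add_0_r. ring.
  intros n. replace (k + S n)%nat with (S k + n)%nat by lia.
  replace (Cmult beta (Cmult (coef beta (S n)) (u (S k + n)%nat))) with (Cmult (Cmult beta (coef beta (S n))) (u (S k + n)%nat)) by ring.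
  rewrite coefS; auto. ring.
Qed.


Lemma sum_series (f : nat -> nat -> R) K :
  (forall k, ex_series (f k)) ->
  ex_series (fun n => sum_n (fun k => f k n) K) /\
  sum_n (fun k => Series (f k)) K = Series (fun n => sum_n (fun k => f k n) K).
Proof.
  intros H. induction K.
  - rewrite sum_O. split. eapply ex_series_ext; [|apply (H 0%nat)]. intros; rewrite sum_O; auto.
    apply Series_ext. intros; rewrite sum_O; auto.
  - destruct IHK as [He Hs]. split.
    + eapply ex_series_ext; [|apply (ex_series_plus _ _ He (H (S K)))]. intros n. rewrite sum_Sn. reflexivity.
    + rewrite sum_Sn, Hs. unfold plus; simpl. rewrite <- Series_plus; auto.
      apply Series_ext. intros n. rewrite sum_Sn. reflexivity.
Qed.

Lemma tail_sum_le (b : nat -> R) n K : (forall j, 0 <= b j) -> ex_series b ->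
  sum_n (fun k => b (k + n)%nat) K <= Series b.
Proof.
  intros H0 He. destruct (tail_le_series b n H0 He) as [E1 E2].
  rewrite (sum_n_ext _ (fun k => b (n + k)%nat)) by (intros; f_equal; lia).
  pose proof (sum_le_series (fun k => b (n + k)%nat) K (fun k => H0 _) E1). lra.
Qed.


Definition hb (y : seqC) (k : nat) : R := INR k * Cmod (Cminus (y k) (y (S k))).

Lemma hb_nonneg y k : 0 <= hb y k.
Proof. unfold hb. apply Rmult_le_pos. apply pos_INR. apply Cmod_ge_0. Qed.

Lemma Sop_diff beta (y : seqC) B k : 1 < Cmod beta -> (forall j, Cmod (y j) <= B) ->
  Cminus (Sop beta y k) (Sop beta y (S k)) =
  CS (fun n => Cmult (coef beta n) (Cminus (y (k+n)%nat) (y (S (k+n))))).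
Proof.
  intros H HB. unfold Sop. rewrite <- CS_minus by (eapply summ_cu; eauto).
  apply CS_ext. intros n. replace (S k + n)%nat with (S (k+n)) by lia. ring.
Qed.

Lemma Sop_hahn beta (y : seqC) : 1 < Cmod beta -> in_hahn y ->
  in_hahn (Sop beta y) /\
  hahn_norm (Sop beta y) <= 2 * Qc beta * hahn_norm y.
Proof.
  intros H [Hser Hlim].
  pose proof (q_facts _ H) as Hq. set (q := / Cmod beta) in *.
  destruct (lim0_bounded y Hlim) as [B0 HB0].
  destruct (sup_bounds (fun k => Cmod (y k)) B0) as [Hsup1 Hsup2].
  { intros k; split; [apply Cmod_ge_0|auto]. }
  set (B := real (Sup_seq (fun k => Cmod (y k)))) in *.
  assert (HB : forall j, Cmod (y j) <= B) by exact Hsup1.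
  assert (HB2 : forall j, Cmod (Cminus (y j) (y (S j))) <= 2 * B).
  { intros j. unfold Cminus. eapply Rle_trans. apply Cmod_triangle. rewrite Cmod_opp. pose proof (HB j); pose proof (HB (S j)). lra. }
  pose proof (Qc_nonneg _ H) as HQ.
  assert (B_nn : 0 <= B) by (pose proof (HB 0%nat); pose proof (Cmod_ge_0 (y 0%nat)); lra).
  set (A := Series (fun k => INR k * Cmod (Cminus (y k) (y (S k))))).
  assert (HA : forall j, hb y j <= A).
  { intros j. apply (term_le_series (hb y)); auto. apply hb_nonneg. }
  pose proof (geomB beta B H) as [GB1 GB2]. fold q in GB1, GB2.
  pose proof (geomB beta A H) as [GA1 GA2]. fold q in GA1, GA2.
  assert (qn : forall n, 0 <= q * q ^ n). { intros n. pose proof (pow_le q n ltac:(lra)). nra. }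
  assert (HS : forall k, Cmod (Sop beta y k) <= 2 * Qc beta * B).
  { intros k. unfold Sop. eapply Rle_trans. apply Cmod_CS. eapply summ_cu; eauto.
    rewrite Rmult_assoc. apply Rmult_le_compat_l. lra. rewrite <- GB2.
    apply Series_le; auto. intros n. split. apply Cmod_ge_0.
    rewrite Cmod_mult, Cmod_coef; auto. fold q. apply Rmult_le_compat_l; auto. }
  set (g := fun k => Series (fun n => q * q ^ n * hb y (k + n))).
  assert (Hg_ex : forall k, ex_series (fun n => q * q ^ n * hb y (k + n))).
  { intros k. apply (series_le_gen _ (fun n => q * q ^ n * A)); auto. intros n. split.
    apply Rmult_le_pos; auto. apply hb_nonneg. apply Rmult_le_compat_l; auto. }
  assert (Hg_nn : forall k, 0 <= g k).
  { intros k. apply series_nonneg; auto. intros n. apply Rmult_le_pos; auto. apply hb_nonneg. }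
  assert (Hg : ex_series g /\ Series g <= Qc beta * A).
  { apply nonneg_bounded_series; auto. intros K. unfold g.
    destruct (sum_series (fun k n => q * q ^ n * hb y (k + n)) K Hg_ex) as [E1 E2].
    rewrite E2. rewrite <- GA2. apply Series_le; auto. intros n. split.
    apply sum_nonneg. intros; apply Rmult_le_pos; auto. apply hb_nonneg.
    rewrite (sum_n_mult_l (K := R_Ring) (q * q ^ n) (fun k => hb y (k + n))). unfold mult; simpl.
    apply Rmult_le_compat_l; auto. apply tail_sum_le; auto. apply hb_nonneg. }
  destruct Hg as [Hg1 Hg2].
  assert (Hd : forall k, 0 <= hb (Sop beta y) k <= 2 * g k).
  { intros k. split. apply hb_nonneg. unfold hb.
    rewrite (Sop_diff beta y B k H HB).
    assert (Hsm : summ (fun n => Cmult (coef beta n) (Cminus (y (k + n)%nat) (y (S (k + n)))))).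
    { apply (summ_cu beta (fun j => Cminus (y j) (y (S j))) (2*B) k H HB2). }
    pose proof (Cmod_CS _ Hsm).
    apply Rle_trans with (INR k * (2 * Series (fun n => Cmod (Cmult (coef beta n) (Cminus (y (k + n)%nat) (y (S (k + n)))))))).
    apply Rmult_le_compat_l; auto. apply pos_INR.
    rewrite <- Rmult_assoc, (Rmult_comm (INR k) 2), Rmult_assoc. apply Rmult_le_compat_l. lra.
    rewrite <- Series_scal_l. unfold g. apply Series_le; auto. intros n. split.
    apply Rmult_le_pos. apply pos_INR. apply Cmod_ge_0.
    rewrite Cmod_mult, Cmod_coef; auto. fold q. unfold hb. rewrite plus_INR.
    pose proof (pos_INR n). pose proof (Cmod_ge_0 (Cminus (y (k + n)%nat) (y (S (k + n))))). 
    specialize (qn n). set (a := q * q ^ n) in *. set (c := Cmod (Cminus (y (k + n)%nat) (y (S (k + n))))) in *.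
    assert (0 <= a * c * INR n) by (apply Rmult_le_pos; [apply Rmult_le_pos|]; auto). lra. }
  assert (Hser' : ex_series (hb (Sop beta y)) /\ Series (hb (Sop beta y)) <= Series (fun k => 2 * g k)).
  { apply series_le_gen; auto. apply ex_series_mult_l; auto. }
  destruct Hser' as [Hs1 Hs2]. rewrite Series_scal_l in Hs2.
  destruct (sup_bounds (fun k => Cmod (Sop beta y k)) (2 * Qc beta * B)) as [_ Hsup3].
  { intros k; split; [apply Cmod_ge_0|auto]. }
  split; [split|].
  - exact Hs1.
  - apply lim0_iff. intros eps Heps.
    assert (He' : 0 < eps / (2 * (Qc beta + 1))).
    { apply Rdiv_lt_0_compat; lra. }
    destruct (proj1 (lim0_iff y) Hlim _ He') as [N HN].
    exists N. intros k Hk.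
    set (e' := eps / (2 * (Qc beta + 1))) in *.
    pose proof (geomB beta e' H) as [GE1 GE2]. fold q in GE1, GE2.
    unfold Sop. eapply Rle_lt_trans. apply Cmod_CS. eapply summ_cu; eauto.
    apply Rle_lt_trans with (2 * (Qc beta * e')).
    apply Rmult_le_compat_l. lra. rewrite <- GE2. apply Series_le; auto. intros n. split. apply Cmod_ge_0.
    rewrite Cmod_mult, Cmod_coef; auto. fold q. apply Rmult_le_compat_l; auto. apply Rlt_le, HN. lia.
    unfold e'. apply Rle_lt_trans with (eps * (Qc beta / (Qc beta + 1))).
    right. field. lra.
    assert (Qc beta / (Qc beta + 1) < 1). { apply (Rmult_lt_reg_r (Qc beta + 1)). lra. unfold Rdiv. rewrite Rmult_assoc, Rinv_l; lra. }
    nra.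
  - unfold hahn_norm. fold (hb (Sop beta y)). fold (hb y). 
    specialize (Hsup3 (2 * Qc beta * B) HS). fold A. fold B.
    change (Series (hb y)) with A.
    assert (Qc beta * (2 * Series g) <= Qc beta * (2 * (Qc beta * A))) by (apply Rmult_le_compat_l; lra).
    assert (0 <= Series g) by (apply series_nonneg; auto).
    clear -Hs2 Hg2 Hsup3 HQ. nra.
Qed.


Lemma resolvent_exists (alpha : C) : 1 < Cmod (Cminus (RtoC 1) alpha) -> hahn_resolvent alpha.
Proof.
  intros H0. set (beta := Cminus alpha (RtoC 1)).
  assert (H : 1 < Cmod beta).
  { replace beta with (Copp (Cminus (RtoC 1) alpha)) by (unfold beta; ring). rewrite Cmod_opp; auto. }
  exists (Sop beta). split; [|split; [|split; [|split]]].
  - intros y Hy. apply (Sop_hahn beta y H Hy).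
  - intros y z a b Hy Hz. destruct (lim0_bounded y (proj2 Hy)) as [By HBy].
    destruct (lim0_bounded z (proj2 Hz)) as [Bz HBz].
    apply functional_extensionality. intros k. unfold Sop.
    rewrite (CS_ext _ (fun n => Cplus (Cmult a (Cmult (coef beta n) (y (k+n)%nat))) (Cmult b (Cmult (coef beta n) (z (k+n)%nat))))).
    rewrite CS_plus by (apply summ_scal; eapply summ_cu; eauto).
    rewrite !CS_scal by (eapply summ_cu; eauto). reflexivity.
    intros n. ring.
  - exists (2 * Qc beta). intros y Hy. apply (Sop_hahn beta y H Hy).
  - intros y Hy. destruct (lim0_bounded y (proj2 Hy)) as [By HBy].
    apply functional_extensionality. intros k. unfold shifted_Delta, Defs.Delta.
    rewrite <- (key beta y By k H HBy). unfold beta. ring.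
  - intros x Hx. destruct (lim0_bounded x (proj2 Hx)) as [Bx HBx].
    apply functional_extensionality. intros k. unfold Sop at 1. unfold shifted_Delta, Defs.Delta.
    rewrite (CS_ext _ (fun n => Cplus (Cmult beta (Cmult (coef beta n) (x (k+n)%nat))) (Cmult (coef beta n) (x (S k + n)%nat)))).
    rewrite CS_plus by (try apply summ_scal; eapply summ_cu; eauto).
    rewrite CS_scal by (eapply summ_cu; eauto).
    apply (key beta x Bx k H HBx).
    intros n. replace (S k + n)%nat with (S (k + n)) by lia. unfold beta. ring.
Qed.


Lemma sum_kr (r : R) N :
  sum_n (fun k => INR k * r ^ k) N * (1 - r) ^ 2 = r - INR (S N) * r ^ (S N) + INR N * r ^ (S (S N)).
Proof.
  induction N. rewrite sum_O. simpl. ring.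
  rewrite sum_Sn. unfold plus; cbn -[INR pow sum_n]. rewrite Rmult_plus_distr_r. rewrite IHN.
  rewrite !S_INR. simpl. ring.
Qed.

Lemma ex_series_kr (r : R) : 0 <= r < 1 -> ex_series (fun k => INR k * r ^ k).
Proof.
  intros Hr. apply (nonneg_bounded_series _ (r / (1 - r) ^ 2)).
  intros n. apply Rmult_le_pos. apply pos_INR. apply pow_le; lra.
  intros N. pose proof (sum_kr r N).
  assert (Hp : 0 < (1 - r) ^ 2) by (apply pow_lt; lra).
  assert (INR N * r ^ S (S N) <= INR (S N) * r ^ S N).
  { rewrite S_INR. simpl. pose proof (pow_le r N ltac:(lra)). pose proof (pos_INR N).
    assert (r * (r * r ^ N) <= r * r ^ N). { assert (0 <= r * r ^ N) by nra. nra. }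
    nra. }
  apply (Rmult_le_reg_r ((1 - r) ^ 2)); auto. unfold Rdiv. rewrite Rmult_assoc, Rinv_l by lra. lra.
Qed.

Lemma geom_hahn (g : C) : Cmod g < 1 -> in_hahn (fun k => Cpow g k).
Proof.
  intros Hg. pose proof (Cmod_ge_0 g). split.
  - apply (series_le_gen _ (fun k => Cmod (Cminus (RtoC 1) g) * (INR k * Cmod g ^ k))).
    intros n. split. apply Rmult_le_pos. apply pos_INR. apply Cmod_ge_0.
    replace (Cminus (Cpow g n) (Cpow g (S n))) with (Cmult (Cminus (RtoC 1) g) (Cpow g n)) by (simpl; ring).
    rewrite Cmod_mult, Cmod_pow. right; ring.
    apply ex_series_mult_l. apply ex_series_kr. lra.
  - apply lim0_iff. intros eps Heps. destruct (pow_lt_1_zero (Cmod g) ltac:(rewrite Rabs_pos_eq; lra) eps Heps) as [N HN].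
    exists N. intros k Hk. rewrite Cmod_pow. specialize (HN k ltac:(lia)). rewrite Rabs_pos_eq in HN. auto. apply pow_le; lra.
Qed.

Lemma real_Rbar_mult (a : R) (s : Rbar) : 0 <= a -> real (Rbar_mult a s) = a * real s.
Proof.
  intros Ha. destruct s as [x| |]; [simpl; ring| |];
  unfold Rbar_mult, Rbar_mult'; destruct (Rle_dec 0 a) as [h|h]; try destruct (Rle_lt_or_eq_dec 0 a h); simpl; ring.
Qed.

Lemma hahn_norm_scal (d : C) (v : seqC) :
  hahn_norm (fun k => Cmult d (v k)) = Cmod d * hahn_norm v.
Proof.
  unfold hahn_norm. rewrite Rmult_plus_distr_l. f_equal.
  - rewrite <- Series_scal_l. apply Series_ext. intros n.
    replace (Cminus (Cmult d (v n)) (Cmult d (v (S n)))) with (Cmult d (Cminus (v n) (v (S n)))) by ring.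
    rewrite Cmod_mult. ring.
  - rewrite <- real_Rbar_mult by apply Cmod_ge_0. rewrite <- Sup_seq_scal_l by apply Cmod_ge_0.
    f_equal. apply Sup_seq_ext. intros n. rewrite Cmod_mult. reflexivity.
Qed.


Lemma pow_le_one (r : R) n : 0 <= r <= 1 -> r ^ n <= 1.
Proof. intros H. induction n. simpl; lra. simpl. pose proof (pow_le r n ltac:(lra)). nra. Qed.

Lemma geom_norm_ge1 (g : C) : Cmod g < 1 -> 1 <= hahn_norm (fun k => Cpow g k).
Proof.
  intros Hg. pose proof (geom_hahn g Hg) as [Hs _]. pose proof (Cmod_ge_0 g).
  unfold hahn_norm.
  assert (0 <= Series (fun k => INR k * Cmod (Cminus (Cpow g k) (Cpow g (S k))))).
  { apply series_nonneg; auto. intros; apply Rmult_le_pos; [apply pos_INR|apply Cmod_ge_0]. }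
  destruct (sup_bounds (fun k => Cmod (Cpow g k)) 1) as [H1 _].
  { intros k. split. apply Cmod_ge_0. rewrite Cmod_pow. apply pow_le_one; lra. }
  specialize (H1 0%nat). simpl in H1. rewrite Cmod_1 in H1. lra.
Qed.

Lemma no_resolvent (alpha : C) : Cmod (Cminus (RtoC 1) alpha) <= 1 -> ~ hahn_resolvent alpha.
Proof.
  intros Hb [Sf [Hh [Hlin [[M HM] [Hr Hl]]]]].
  set (beta := Cminus alpha (RtoC 1)).
  assert (Hbeta : Cmod beta <= 1).
  { replace beta with (Copp (Cminus (RtoC 1) alpha)) by (unfold beta; ring). rewrite Cmod_opp; auto. }
  pose proof (Cmod_ge_0 beta).
  set (eps := / (Rabs M + 1)).
  assert (Heps : 0 < eps <= 1).
  { unfold eps. pose proof (Rabs_pos M). split. apply Rinv_0_lt_compat; lra.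
    rewrite <- Rinv_1. apply Rinv_le_contravar; lra. }
  assert (HepsM : eps * Rabs M < 1).
  { unfold eps. pose proof (Rabs_pos M). apply (Rmult_lt_reg_r (Rabs M + 1)). lra.
    rewrite Rmult_comm, <- Rmult_assoc, Rinv_r by lra. lra. }
  set (t := 1 - eps / 2).
  set (g := Copp (Cmult (RtoC t) beta)).
  assert (Hg : Cmod g < 1).
  { unfold g. rewrite Cmod_opp, Cmod_mult, Cmod_R. rewrite Rabs_pos_eq by (unfold t; lra).
    unfold t. nra. }
  set (x := fun k => Cpow g k).
  assert (Hx : in_hahn x) by (apply geom_hahn; auto).
  set (d := Cmult (Cminus (RtoC 1) (RtoC t)) beta).
  assert (Hd : Cmod d <= eps / 2).
  { unfold d. rewrite Cmod_mult, <- RtoC_minus, Cmod_R, Rabs_pos_eq by (unfold t; lra).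
    unfold t. nra. }
  assert (E1 : shifted_Delta alpha x = fun k => Cplus (Cmult d (x k)) (Cmult (RtoC 0) (x k))).
  { apply functional_extensionality. intros k. unfold shifted_Delta, Defs.Delta, x. change (Cpow g (S k)) with (Cmult g (Cpow g k)). generalize (Cpow g k); intros P. unfold d, g, beta. ring. }
  pose proof (Hl x Hx) as E2. rewrite E1, (Hlin x x d (RtoC 0) Hx Hx) in E2.
  assert (E3 : x = fun k => Cmult d (Sf x k)).
  { rewrite <- E2 at 1. apply functional_extensionality. intros k. ring. }
  pose proof (HM x Hx) as HMx.
  pose proof (geom_norm_ge1 g Hg) as Hn. fold x in Hn.
  assert (Hn2 : hahn_norm x = Cmod d * hahn_norm (Sf x)).
  { rewrite <- hahn_norm_scal. rewrite <- E3. reflexivity. }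
  pose proof (Cmod_ge_0 d).
  set (N := hahn_norm x) in *. set (N' := hahn_norm (Sf x)) in *.
  assert (Cmod d * N' <= Cmod d * (M * N)) by (apply Rmult_le_compat_l; auto).
  assert (M * N <= Rabs M * N) by (apply Rmult_le_compat_r; [lra| apply Rle_abs]).
  assert (Cmod d * (M * N) <= Cmod d * (Rabs M * N)) by (apply Rmult_le_compat_l; auto).
  assert (Cmod d * (Rabs M * N) <= eps / 2 * (Rabs M * N)).
  { apply Rmult_le_compat_r; auto. pose proof (Rabs_pos M). nra. }
  assert (eps / 2 * (Rabs M * N) < N) by nra.
  lra.
Qed.

Theorem theorem4p1 (alpha : C) :
  hahn_spectrum_Delta alpha <-> Cmod (Cminus (RtoC 1) alpha) <= 1.
Proof.
  unfold hahn_spectrum_Delta. split.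
  - intros H. destruct (Rle_lt_dec (Cmod (Cminus (RtoC 1) alpha)) 1) as [h|h]; auto.
    exfalso. apply H. apply resolvent_exists; auto.
  - apply no_resolvent.
Qed.
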